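(* Let $1\le d$ and $n\ge d+2$ be integers, let $I\subseteq[n]$ with $|I|=d+1$, and let $A_I\subseteq V(P(d,n))$ be the set of $d$-tuples with pairwise distinct entries from $I$. Then the induced subgraph $P(d,n)[A_I]$ is isomorphic to $P(d,d+1)$ (hence bipartite), and for every maximal clique $K$ of $P(d,n)$, $|V(K)\cap A_I|\in\{0,2\}$.
   Context: For integers $1\le d\le n$, the partial permutation graph $P(d,n)$ has as vertices all $d$-tuples with pairwise distinct entries from $[n]=\{1,\dots,n\}$, two being adjacent iff they differ in exactly one coordinate. *)

(* Defs.v *)
From mathcomp Require Import all_boot.
Set Implicit Arguments. Unset Strict Implicit. Unset Printing Implicit Defensive.

Definition ppvert (d n : nat) := {t : d.-tuple 'I_n | uniq t}.

Definition padj (d n : nat) : rel (ppvert d n) :=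
  fun x y => #|[set i : 'I_d | tnth (val x) i != tnth (val y) i]| == 1.

Definition AI (d n : nat) (I : {set 'I_n}) : {set ppvert d n} :=
  [set x : ppvert d n | all (fun a => a \in I) (val x)].

Definition is_clique (d n : nat) (K : {set ppvert d n}) : Prop :=
  forall x y, x \in K -> y \in K -> x != y -> padj x y.

Definition is_max_clique (d n : nat) (K : {set ppvert d n}) : Prop :=
  is_clique K /\ forall K' : {set ppvert d n}, is_clique K' -> K \subset K' -> K' = K.

(* Main.v *)
Require Import Defs.
From mathcomp Require Import all_boot all_fingroup zify.
Set Implicit Arguments. Unset Strict Implicit. Unset Printing Implicit Defensive.

Section Gen.
Variables d n : nat.
Implicit Types x y z : ppvert d n.

Lemma padj_only x y (j k : 'I_d) : padj x y -> tnth (val x) j != tnth (val y) j ->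
  k != j -> tnth (val x) k = tnth (val y) k.
Proof.
move=> /cards1P [i Hi] Hj Hk.
have : j \in [set i0 | tnth (val x) i0 != tnth (val y) i0] by rewrite inE.
rewrite Hi inE => /eqP Eji.
apply/eqP; apply: contraNT Hk => Hk.
have : k \in [set i0 | tnth (val x) i0 != tnth (val y) i0] by rewrite inE.
by rewrite Hi inE Eji.
Qed.

Lemma padj_of x y (i : 'I_d) : tnth (val x) i != tnth (val y) i ->
  (forall j, j != i -> tnth (val x) j = tnth (val y) j) -> padj x y.
Proof.
move=> Hi Hj; rewrite /padj.
rewrite (_ : [set _ | _] = [set i]) ?cards1 //.
apply/setP => j; rewrite !inE.
case: (eqVneq j i) => [->//|ne]; by rewrite Hj ?ne ?eqxx.
Qed.

Lemma padjC x y : padj x y = padj y x.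
Proof.
rewrite /padj (_ : [set _ | _] = [set i | tnth (val y) i != tnth (val x) i]) //.
by apply/setP => i; rewrite !inE eq_sym.
Qed.

Lemma vert_eq x y : (forall j, tnth (val x) j = tnth (val y) j) -> x = y.
Proof. by move=> H; apply: val_inj; apply: eq_from_tnth. Qed.

Lemma rep_ex x (i : 'I_d) (v : 'I_n) : (forall j, j != i -> v != tnth (val x) j) ->
  exists z, tnth (val z) i = v /\ forall j, j != i -> tnth (val z) j = tnth (val x) j.
Proof.
move=> Hv.
pose t := [tuple (if j == i then v else tnth (val x) j) | j < d].
have ut : uniq t.
  apply/tuple_uniqP => j k; rewrite !tnth_mktuple.
  have /tuple_uniqP ux := valP x.
  case: (eqVneq j i) => [->|nj]; case: (eqVneq k i) => [->//|nk].
  - by move=> E; move: (Hv k nk); rewrite E eqxx.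
  - by move=> E; move: (Hv j nj); rewrite -E eqxx.
  - exact: ux.
exists (exist _ t ut); split => [|j nj] /=; rewrite tnth_mktuple ?eqxx //.
by rewrite (negbTE nj).
Qed.

End Gen.

Section Bip.
Variable d : nat.
Implicit Types x y : ppvert d d.+1.

Definition missing x : 'I_d.+1 := odflt ord0 [pick a | a \notin val x].

Lemma missingP x : missing x \notin val x.
Proof.
rewrite /missing; case: pickP => [a //|H]; exfalso.
have : size (enum 'I_d.+1) <= size (val x).
  apply: uniq_leq_size; first exact: enum_uniq.
  by move=> a _; move: (H a) => /negbFE.
by rewrite size_enum_ord size_tuple ltnn.
Qed.

Lemma missing_uniq x a : a \notin val x -> a = missing x.
Proof.
move=> Ha; apply/eqP; apply: contraT => ne.
have : size (a :: missing x :: val x) <= size (enum 'I_d.+1).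
  apply: uniq_leq_size; last by move=> b; rewrite mem_enum.
  by rewrite /= inE negb_or ne Ha missingP (valP x).
by rewrite size_enum_ord /= size_tuple ltnn.
Qed.

Definition pfun x (k : 'I_d.+1) : 'I_d.+1 := nth ord0 (rcons (val x) (missing x)) k.

Lemma pfun_inj x : injective (pfun x).
Proof.
move=> k l; rewrite /pfun => /eqP.
rewrite nth_uniq ?size_rcons ?size_tuple ?ltn_ord ?rcons_uniq ?missingP ?(valP x) //.
by move/eqP/ord_inj.
Qed.

Definition col x := odd_perm (perm (@pfun_inj x)).

Lemma col_adj x y : padj x y -> col x != col y.
Proof.
move=> Hxy.
have [i Hi] : exists i, tnth (val x) i != tnth (val y) i.
  move: Hxy => /cards1P [i Hi]; exists i.
  have : i \in [set i0 | tnth (val x) i0 != tnth (val y) i0] by rewrite Hi inE.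
  by rewrite inE.
have Ho := padj_only Hxy Hi.
have ux := valP x; have uy := valP y.
move: ux uy => /tuple_uniqP ux /tuple_uniqP uy.
have mx : tnth (val y) i = missing x.
  apply: missing_uniq; apply/negP => /tnthP [j Ej].
  case: (eqVneq j i) => [Eji|nj]; first by move: Hi; rewrite Ej Eji eqxx.
  have := uy i j; rewrite Ej (Ho j nj) => /(_ erefl) Eij; by rewrite Eij eqxx in nj.
have my : tnth (val x) i = missing y.
  apply: missing_uniq; apply/negP => /tnthP [j Ej].
  case: (eqVneq j i) => [Eji|nj]; first by move: Hi; rewrite Ej Eji eqxx.
  have := ux i j; rewrite Ej -(Ho j nj) => /(_ erefl) Eij; by rewrite Eij eqxx in nj.
pose i' := widen_ord (leqnSn d) i.
have E : perm (@pfun_inj y) = (tperm i' ord_max * perm (@pfun_inj x))%g.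
  apply/permP => k; rewrite permM !permE /pfun /=.
  have io : i' != ord_max by rewrite -val_eqE /= neq_ltn ltn_ord.
  case: (eqVneq k i') => [->|nk1].
    rewrite !nth_rcons !size_tuple /= ltn_ord ltnn eqxx.
    by rewrite -mx (tnth_nth ord0).
  case: (eqVneq k ord_max) => [->|nk2].
    rewrite !nth_rcons !size_tuple /= ltn_ord ltnn eqxx.
    by rewrite (tnth_nth ord0) in my; rewrite my.
  have kd : k < d.
    rewrite ltn_neqAle -ltnS ltn_ord andbT; apply: contra nk2 => /eqP Ek.
    by apply/eqP/ord_inj.
  rewrite !nth_rcons !size_tuple kd.
  have nj : Ordinal kd != i.
    by apply: contra nk1 => /eqP Ei; apply/eqP/ord_inj; rewrite /= -Ei.
  have := Ho _ nj; rewrite !(tnth_nth ord0) /= => ->; by [].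
rewrite /col E odd_permM odd_tperm.
have -> : i' != ord_max by rewrite -val_eqE /= neq_ltn ltn_ord.
by case: (odd_perm _).
Qed.

End Bip.

Section Emb.
Variables (d n : nat) (I : {set 'I_n}) (HI : #|I| = d.+1).

Definition emb (k : 'I_d.+1) : 'I_n := enum_val (cast_ord (esym HI) k).
Lemma emb_inj : injective emb.
Proof. by move=> k l /enum_val_inj /cast_ord_inj. Qed.
Lemma emb_in k : emb k \in I.
Proof. exact: enum_valP. Qed.
Lemma emb_surj a : a \in I -> exists k, emb k = a.
Proof.
move=> Ha; exists (cast_ord HI (enum_rank_in Ha a)).
by rewrite /emb cast_ordK enum_rankK_in.
Qed.

Lemma fmap_uniq (x : ppvert d d.+1) : uniq (map_tuple emb (val x)).
Proof. by rewrite map_inj_uniq ?(valP x) //; exact: emb_inj. Qed.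

Definition fmap (x : ppvert d d.+1) : ppvert d n := exist (fun t : d.-tuple 'I_n => uniq t) _ (fmap_uniq x).

Lemma fmap_inj : injective fmap.
Proof.
move=> x y /(congr1 val) /= E; apply: val_inj; apply: val_inj.
by apply: (inj_map emb_inj); move: (congr1 val E).
Qed.

Lemma fmap_in x : fmap x \in AI d I.
Proof. by rewrite inE; apply/allP => a /mapP [k _ ->]; exact: emb_in. Qed.

Lemma fmap_surj y : y \in AI d I -> exists x, fmap x = y.
Proof.
rewrite inE => /allP Hy.
pose g (a : 'I_n) : 'I_d.+1 := odflt ord0 [pick k | emb k == a].
have eg a : a \in I -> emb (g a) = a.
  move=> Ha; rewrite /g; case: pickP => [k /eqP //|H].
  by have [k Ek] := emb_surj Ha; move: (H k); rewrite Ek eqxx.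
have Ey : map emb (map g (val y)) = val y.
  rewrite -map_comp -[RHS]map_id; apply/eq_in_map => a Ha /=; exact: eg (Hy a Ha).
have ut : uniq (map_tuple g (val y)).
  by rewrite /= -(map_inj_uniq emb_inj) Ey (valP y).
exists (exist (fun t : d.-tuple 'I_d.+1 => uniq t) _ ut); apply: val_inj; apply: val_inj => /=; exact: Ey.
Qed.

Lemma fmap_adj x y : padj (fmap x) (fmap y) = padj x y.
Proof.
rewrite /padj (_ : [set _ | _] = [set i | tnth (val x) i != tnth (val y) i]) //.
by apply/setP => i; rewrite !inE /= !tnth_map (inj_eq emb_inj).
Qed.

End Emb.

Section Cl.
Variables (d n : nat) (I : {set 'I_n}).
Hypotheses (Hd : 1 <= d) (Hn : d + 2 <= n) (HI : #|I| = d.+1).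

Definition line (x : ppvert d n) (i : 'I_d) : {set ppvert d n} :=
  [set z | [forall j, (j != i) ==> (tnth (val z) j == tnth (val x) j)]].

Lemma line_clique x i : is_clique (line x i).
Proof.
move=> z w; rewrite !inE => /forallP Hz /forallP Hw nzw.
have Hzw j : j != i -> tnth (val z) j = tnth (val w) j.
  by move=> nj; move: (Hz j) (Hw j); rewrite nj /= => /eqP -> /eqP ->.
apply: (padj_of (i := i)) => //.
apply: contra nzw => /eqP Ei; apply/eqP; apply: vert_eq => j.
by case: (eqVneq j i) => [->//|nj]; exact: Hzw.
Qed.

Lemma nonmax x : forall K : {set ppvert d n}, is_max_clique K -> ~~ (K \subset [set x]).
Proof.
move=> K [_ HK]; apply/negP => Kx.
have [v Hv] : exists v, v \notin val x.
  apply/existsP; apply: contraT; rewrite negb_exists => /forallP H.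
  have : size (enum 'I_n) <= size (val x).
    apply: uniq_leq_size; first exact: enum_uniq.
    by move=> a _; move: (H a) => /negbNE.
  by rewrite size_enum_ord size_tuple leqNgt; move: Hn; rewrite addn2 => /ltnW ->.
pose i0 : 'I_d := Ordinal Hd.
have Hv' : forall j, j != i0 -> v != tnth (val x) j.
  by move=> j _; apply: contra Hv => /eqP ->; exact: mem_tnth.
have [y [Hy1 Hy2]] := rep_ex Hv'.
have axy : padj x y.
  apply: (padj_of (i := i0)); first by rewrite Hy1; apply: contra Hv => /eqP <-; exact: mem_tnth.
  by move=> j nj; rewrite Hy2.
have nxy : y != x by apply: contra Hv => /eqP <-; rewrite -Hy1 mem_tnth.
have cl : is_clique [set x; y].
  move=> a b; rewrite !inE => /orP [] /eqP -> /orP [] /eqP ->; rewrite ?eqxx //.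
  by rewrite padjC.
have := HK _ cl; rewrite (subset_trans Kx) ?sub1set ?inE ?eqxx // => /(_ isT) E.
have : y \in K by rewrite -E !inE eqxx orbT.
by move/(subsetP Kx); rewrite inE (negbTE nxy).
Qed.

Lemma padj_ex (x y : ppvert d n) : padj x y -> exists i, tnth (val x) i != tnth (val y) i.
Proof.
move=> /cards1P [i Hi]; exists i.
have : i \in [set i0 | tnth (val x) i0 != tnth (val y) i0] by rewrite Hi inE.
by rewrite inE.
Qed.

Lemma clique_line K : is_max_clique K -> exists x i, K = line x i.
Proof.
move=> HK.
have Hdn : d <= n by apply: leq_trans Hn; rewrite leq_addr.
have u0 : uniq [tuple widen_ord Hdn j | j < d].
  apply/tuple_uniqP => j k; rewrite !tnth_mktuple => /(congr1 val) /= E.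
  exact: ord_inj.
pose v0 : ppvert d n := exist (fun t : d.-tuple 'I_n => uniq t) _ u0.
have /subsetPn [x Kx _] := nonmax v0 HK.
have /subsetPn [y Ky ny] := nonmax x HK.
rewrite inE in ny.
have nxy : x != y by rewrite eq_sym.
have axy := (proj1 HK) x y Kx Ky nxy.
have [i Hi] := padj_ex axy.
exists x, i; apply/esym; apply: (proj2 HK); first exact: line_clique.
apply/subsetP => z Kz; rewrite inE; apply/forallP => j; apply/implyP => nj.
case: (eqVneq z x) => [->//|nzx].
case: (eqVneq z y) => [->|nzy]; first by rewrite (padj_only axy Hi nj).
have azx := (proj1 HK) z x Kz Kx nzx.
have azy := (proj1 HK) z y Kz Ky nzy.
apply: contraT => H.
have zi : tnth (val z) i = tnth (val x) i by apply: (padj_only azx H); rewrite eq_sym.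
have : tnth (val z) i != tnth (val y) i by rewrite zi.
move/(padj_only azy) => /(_ j nj) zj.
by rewrite zj -(padj_only axy Hi nj) eqxx in H.
Qed.

Lemma line_AI x i : #|line x i :&: AI d I| = 0 \/ #|line x i :&: AI d I| = 2.
Proof.
case: (boolP [forall j, (j != i) ==> (tnth (val x) j \in I)]) => HS; last first.
  left; move: HS; rewrite negb_forall => /existsP [j]; rewrite negb_imply => /andP [nj xj].
  apply/eqP; rewrite cards_eq0; apply/eqP/setP => z; rewrite !inE.
  apply/negP => /andP [/forallP Hz /allP Ha].
  move: (Hz j); rewrite nj /= => /eqP E.
  by move: (Ha _ (mem_tnth j (val z))); rewrite E (negbTE xj).
right.
have /tuple_uniqP ux := valP x.
pose S := [set tnth (val x) j | j in [set~ i]].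
have cS : #|S| = d.-1.
  rewrite card_in_imset; last by move=> j k _ _; exact: ux.
  by rewrite cardsC1 card_ord.
have SI : S \subset I.
  apply/subsetP => a /imsetP [j]; rewrite !inE => nj ->.
  by move/forallP: HS => /(_ j); rewrite nj.
have cJ : #|I :\: S| = 2.
  rewrite cardsD (setIidPr SI) HI cS; case: (d) Hd => // d' _ /=.
  lia.
have EJ : [set tnth (val z) i | z in line x i :&: AI d I] = I :\: S.
  apply/setP => v; apply/imsetP/idP.
    move=> [z Hz ->]; move: Hz; rewrite !inE => /andP [/forallP Hz /allP Ha].
    rewrite (Ha _ (mem_tnth i (val z))) andbT.
    apply/imsetP => [[j Hj E]]; rewrite !inE in Hj.
    have /tuple_uniqP uz := valP z.
    move: (Hz j); rewrite Hj /= -E => /eqP /uz Eji.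
    by rewrite Eji eqxx in Hj.
  rewrite inE => /andP [nS vI].
  have Hv' : forall j, j != i -> v != tnth (val x) j.
    move=> j nj; apply: contra nS => /eqP ->; apply/imsetP; exists j => //.
    by rewrite !inE.
  have [z [Hz1 Hz2]] := rep_ex Hv'.
  exists z => //; rewrite !inE; apply/andP; split.
    by apply/forallP => j; apply/implyP => nj; rewrite Hz2.
  apply/allP => a /tnthP [k ->].
  case: (eqVneq k i) => [->|nk]; first by rewrite Hz1.
  by rewrite Hz2 //; move/forallP: HS => /(_ k); rewrite nk.
rewrite -cJ -EJ card_in_imset //.
move=> z w; rewrite !inE => /andP [/forallP Hz _] /andP [/forallP Hw _] E.
apply: vert_eq => j; case: (eqVneq j i) => [->//|nj].
by move: (Hz j) (Hw j); rewrite nj /= => /eqP -> /eqP ->.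
Qed.

End Cl.

Theorem mainTheorem6 (d n : nat) (I : {set 'I_n}) :
  1 <= d -> d + 2 <= n -> #|I| = d.+1 ->
  (* P(d,n)[A_I] is isomorphic to P(d,d+1) *)
  (exists f : ppvert d d.+1 -> ppvert d n,
      injective f /\
      (forall x, f x \in AI d I) /\
      (forall y, y \in AI d I -> exists x, f x = y) /\
      (forall x y, padj (f x) (f y) = padj x y)) /\
  (* hence bipartite *)
  (exists c : ppvert d n -> bool,
      forall x y, x \in AI d I -> y \in AI d I -> padj x y -> c x != c y) /\
  (* every maximal clique meets A_I in 0 or 2 vertices *)
  (forall K : {set ppvert d n}, is_max_clique K ->
      #|K :&: AI d I| = 0 \/ #|K :&: AI d I| = 2).
Proof.
move=> Hd Hn HI; split; [|split].
- exists (fmap HI); split; first exact: fmap_inj.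
  split; first exact: fmap_in.
  split; first exact: fmap_surj.
  exact: fmap_adj.
- exists (fun y => if [pick x | fmap HI x == y] is Some x then col x else false).
  move=> x y Hx Hy Hxy.
  have [x' Ex] := fmap_surj HI Hx; have [y' Ey] := fmap_surj HI Hy.
  case: pickP => [x1 /eqP E1|H]; last by move: (H x'); rewrite Ex eqxx.
  case: pickP => [y1 /eqP E2|H]; last by move: (H y'); rewrite Ey eqxx.
  by apply: col_adj; rewrite -(fmap_adj HI) E1 E2.
- move=> K HK; have [x [i ->]] := clique_line Hd Hn HK; exact: line_AI.
Qed.
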